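(* The maps $\sigma,\tau,\theta:E\to E$ defined by \[\sigma(A)=-A^*,\qquad \tau(A)=-A^{\mathrm t},\qquad \theta(A)=TAT^{-1}\] pairwise commute.
   Context: Setting: - $V$ is a finite-dimensional complex inner product space, and $W=V\oplus V^*$ carries the orthogonal-sum unitary structure $\langle\,,\rangle$, where $V^*$ gets the structure transported from $V$ via $C_0v=\langle v,\cdot\rangle_V$, i.e. $\langle f,\tilde f\rangle=\langle C_0^{-1}\tilde f,C_0^{-1}f\rangle_V$. - $b$ is either $s(v_1+f_1,v_2+f_2)=f_1(v_2)+f_2(v_1)$ or $a(v_1+f_1,v_2+f_2)=f_1(v_2)-f_2(v_1)$. - $C:W\to W$ is antilinear with $C|_V=C_0$ and $C|_{V^*}=C_0^{-1}$ (if $b=s$) or $-C_0^{-1}$ (if $b=a$), so that $b(Cw_1,w_2)=\langle w_1,w_2\rangle$. - $E$ is either $\mathrm{End}(W)$ or $\mathrm{End}(V)\oplus\mathrm{End}(V^* )$. - $A^*$ is the adjoint with respect to $\langle\,,\rangle$, and $A^{\mathrm t}$ the adjoint with respect to $b$ ($b(Aw_1,w_2)=b(w_1,A^{\mathrm t}w_2)$). - $T:W\to W$ is antiunitary, commutes with $C$, satisfies $T^2=\pm\mathrm{Id}$, and is either nonmixing ($T(V)=V$, $T(V^* )=V^*$) or mixing ($T(V)=V^*$, $T(V^* )=V$). *)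

(* Defs.v *)
From HB Require Import structures.
From mathcomp Require Import all_boot all_order all_algebra.
From mathcomp Require Import complex.
Set Implicit Arguments. Unset Strict Implicit. Unset Printing Implicit Defensive.
Import Order.TTheory GRing.Theory Num.Theory.
Local Open Scope ring_scope.

Section Setting.
Variable R : rcfType.
Local Notation K := (R[i]).

Definition adjmx m p (A : 'M[K]_(m, p)) : 'M[K]_(p, m) := (map_mx Num.conj A)^T.

(* V = K^n as column vectors, with inner product <u,v>_V = u^* G v
   (antilinear in the first, linear in the second argument), where G is a
   positive definite Hermitian matrix (any finite-dimensional inner product
   space is of this form after choosing a basis).
   V^* = row vectors 'rV_n, f(v) = f *m v. *)
Variable n : nat.
Variable G : 'M[K]_n.

Definition ipV (u v : 'cV[K]_n) : K := (adjmx u *m G *m v) 0 0.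

Definition C0 (v : 'cV[K]_n) : 'rV[K]_n := adjmx v *m G.
Definition C0inv (f : 'rV[K]_n) : 'cV[K]_n := adjmx (f *m invmx G).

(* W = V (+) V^* is modelled as 'cV_(n + n): a vector w encodes
   v + f with v = usubmx w and f = (dsubmx w)^T. *)
Definition Wpart (w : 'cV[K]_(n + n)) : 'cV[K]_n := usubmx w.
Definition Dpart (w : 'cV[K]_(n + n)) : 'rV[K]_n := (dsubmx w)^T.
Definition mkW (v : 'cV[K]_n) (f : 'rV[K]_n) : 'cV[K]_(n + n) := col_mx v f^T.

Definition ipW (w1 w2 : 'cV[K]_(n + n)) : K :=
  ipV (Wpart w1) (Wpart w2) + ipV (C0inv (Dpart w2)) (C0inv (Dpart w1)).

(* sym = true : b = s (symmetric);  sym = false : b = a (antisymmetric) *)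
Definition sgnb (sym : bool) : K := if sym then 1 else -1.

Definition bW (sym : bool) (w1 w2 : 'cV[K]_(n + n)) : K :=
  (Dpart w1 *m Wpart w2) 0 0 + sgnb sym * (Dpart w2 *m Wpart w1) 0 0.

Definition Cmap (sym : bool) (w : 'cV[K]_(n + n)) : 'cV[K]_(n + n) :=
  mkW (sgnb sym *: C0inv (Dpart w)) (C0 (Wpart w)).

Definition gramW (F : 'cV[K]_(n + n) -> 'cV[K]_(n + n) -> K) : 'M[K]_(n + n) :=
  \matrix_(i, j) F (delta_mx i 0) (delta_mx j 0).

(* A^* : adjoint w.r.t. <,> ; since <w1,w2> = w1^* H w2, A^* = H^-1 A^*T H *)
Definition adjW (A : 'M[K]_(n + n)) : 'M[K]_(n + n) :=
  invmx (gramW ipW) *m adjmx A *m gramW ipW.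

(* A^t : adjoint w.r.t. b ; since b(w1,w2) = w1^T B w2, A^t = B^-1 A^T B *)
Definition transW (sym : bool) (A : 'M[K]_(n + n)) : 'M[K]_(n + n) :=
  invmx (gramW (bW sym)) *m A^T *m gramW (bW sym).

Definition fun_mx (f : 'cV[K]_(n + n) -> 'cV[K]_(n + n)) : 'M[K]_(n + n) :=
  \matrix_(i, j) f (delta_mx j 0) i 0.

Definition thetaW (T Tinv : 'cV[K]_(n + n) -> 'cV[K]_(n + n))
  (A : 'M[K]_(n + n)) : 'M[K]_(n + n) :=
  fun_mx (fun w => T (A *m Tinv w)).

Definition sigmaW (A : 'M[K]_(n + n)) : 'M[K]_(n + n) := - adjW A.
Definition tauW (sym : bool) (A : 'M[K]_(n + n)) : 'M[K]_(n + n) :=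
  - transW sym A.

(* E : Eall = true : E = End(W);  Eall = false : E = End(V) (+) End(V dual) *)
Definition inEsp (Eall : bool) (A : 'M[K]_(n + n)) : Prop :=
  Eall \/ (ursubmx A = 0 /\ dlsubmx A = 0).

Definition inV (w : 'cV[K]_(n + n)) : Prop := dsubmx w = 0.
Definition inVd (w : 'cV[K]_(n + n)) : Prop := usubmx w = 0.

Definition maps_onto (T : 'cV[K]_(n + n) -> 'cV[K]_(n + n))
  (X Y : 'cV[K]_(n + n) -> Prop) : Prop :=
  (forall w, X w -> Y (T w)) /\ (forall w, Y w -> exists2 w', X w' & T w' = w).

End Setting.

(* Main.v *)
Require Import Defs.
From HB Require Import structures.
From mathcomp Require Import all_boot all_order all_algebra.
From mathcomp Require Import complex.
Import Order.TTheory GRing.Theory Num.Theory.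
Local Open Scope ring_scope.


Lemma invmx_eq (F : comUnitRingType) k (X Y : 'M[F]_k) : X *m Y = 1%:M -> invmx X = Y.
Proof.
move=> XY; have [Xu _] := mulmx1_unit XY.
by rewrite -[RHS]mul1mx -(mulVmx Xu) -mulmxA XY mulmx1.
Qed.

Lemma invmxM' (F : comUnitRingType) k (X Y : 'M[F]_k) :
  X \in unitmx -> Y \in unitmx -> invmx (X *m Y) = invmx Y *m invmx X.
Proof.
move=> Xu Yu; apply: invmx_eq.
by rewrite mulmxA -(mulmxA X) mulmxV // mulmx1 mulmxV.
Qed.

Section A.
Variable R : rcfType.
Local Notation K := (R[i]).

Lemma adjmxK m p (A : 'M[K]_(m,p)) : adjmx (adjmx A) = A.
Proof. by apply/matrixP => i j; rewrite !mxE conjCK. Qed.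

Lemma adjmxM m p q (A : 'M[K]_(m,p)) (B : 'M[K]_(p,q)) :
  adjmx (A *m B) = adjmx B *m adjmx A.
Proof. by rewrite /adjmx map_mxM trmx_mul. Qed.

Lemma adjmxD m p (A B : 'M[K]_(m,p)) : adjmx (A + B) = adjmx A + adjmx B.
Proof. by rewrite /adjmx map_mxD linearD. Qed.

Lemma adjmxN m p (A : 'M[K]_(m,p)) : adjmx (- A) = - adjmx A.
Proof. by rewrite /adjmx map_mxN linearN. Qed.

Lemma adjmxZ m p a (A : 'M[K]_(m,p)) : adjmx (a *: A) = a^* *: adjmx A.
Proof. by rewrite /adjmx map_mxZ linearZ. Qed.

Lemma adjmx_tr m p (A : 'M[K]_(m,p)) : adjmx (A^T) = map_mx Num.conj A.
Proof. by rewrite /adjmx map_trmx trmxK. Qed.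

Lemma adjmx_conj m p (A : 'M[K]_(m,p)) : adjmx (map_mx Num.conj A) = A^T.
Proof. by apply/matrixP => i j; rewrite !mxE conjCK. Qed.

Lemma conj_conj m p (A : 'M[K]_(m,p)) : map_mx Num.conj (map_mx Num.conj A) = A.
Proof. by apply/matrixP => i j; rewrite !mxE conjCK. Qed.

Lemma adjmx_inv k (A : 'M[K]_k) : adjmx (invmx A) = invmx (adjmx A).
Proof. by rewrite /adjmx map_invmx trmx_inv. Qed.

Lemma adjmx_delta m p (i : 'I_m) (j : 'I_p) : adjmx (delta_mx i j : 'M[K]_(m,p)) = delta_mx j i.
Proof.
apply/matrixP => a b; rewrite !mxE.
by case: (a == j); case: (b == i); rewrite /= ?rmorph1 ?rmorph0.
Qed.

Lemma entry_form k (M : 'M[K]_k) i j :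
  (delta_mx (0:'I_1) i *m M *m delta_mx j (0:'I_1)) 0 0 = M i j.
Proof. by rewrite -rowE -colE !mxE. Qed.

Lemma m11_tr (M : 'M[K]_1) : M 0 0 = M^T 0 0.
Proof. by rewrite mxE. Qed.

Lemma sgnb_conj s : (sgnb R s)^* = sgnb R s.
Proof. by case: s; rewrite /= ?rmorphN rmorph1. Qed.

Lemma sgnb_sq s : sgnb R s * sgnb R s = 1.
Proof. by case: s; rewrite /= ?mulrNN mulr1. Qed.

End A.


Set Implicit Arguments. Unset Strict Implicit.

Section B.
Variable R : rcfType.
Local Notation K := (R[i]).
Variable n : nat.
Variable G : 'M[K]_n.

Lemma G_unit : (forall v : 'cV[K]_n, v != 0 -> 0 < ipV G v v) -> G \in unitmx.
Proof.
move=> Gpos; rewrite unitmxE unitfE; apply/negP => /det0P [v v0 vG].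
have u0 : adjmx v != 0.
  apply: contra v0 => /eqP h; apply/eqP; by rewrite -[v]adjmxK h /adjmx map_mx0 trmx0.
have := Gpos _ u0; rewrite /ipV adjmxK vG.
by rewrite (@mul0mx _ 1 n 1) mxE ltxx.
Qed.

Definition HW : 'M[K]_(n + n) := block_mx G 0 0 (map_mx Num.conj (invmx G)).
Definition BW s : 'M[K]_(n + n) := block_mx 0 (sgnb R s)%:M 1%:M 0.

Hypothesis Gu : G \in unitmx.

Lemma addmxij m p (A B : 'M[K]_(m,p)) i j : (A + B) i j = A i j + B i j.
Proof. by rewrite mxE. Qed.

Lemma ipW_form w1 w2 : ipW G w1 w2 = (adjmx w1 *m HW *m w2) 0 0.
Proof.
rewrite -[w1]vsubmxK -[w2]vsubmxK /ipW /Wpart /Dpart !col_mxKu !col_mxKd.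
rewrite /adjmx map_col_mx tr_col_mx -!/(adjmx _) /HW mul_row_block mul_row_col.
rewrite !mulmx0 !addr0 add0r addmxij; congr (_ + _).
rewrite /ipV /C0inv adjmxK -!mulmxA (mulmxA (invmx G)) mulVmx // mul1mx.

rewrite adjmxM adjmx_tr m11_tr !trmx_mul.
by rewrite /adjmx trmxK mulmxA.

Qed.


Lemma scalemxij m p a (A : 'M[K]_(m,p)) i j : (a *: A) i j = a * A i j.
Proof. by rewrite mxE. Qed.

Lemma bW_form s w1 w2 : bW s w1 w2 = (w1^T *m BW s *m w2) 0 0.
Proof.
rewrite -[w1]vsubmxK -[w2]vsubmxK.
move: (usubmx w1) (dsubmx w1) (usubmx w2) (dsubmx w2) => u1 d1 u2 d2.
rewrite /bW /Wpart /Dpart !col_mxKu !col_mxKd tr_col_mx /BW mul_row_block mul_row_col.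
rewrite !mulmx0 !mulmx1 add0r addr0 mul_mx_scalar -scalemxAl addmxij scalemxij.
by congr (_ + _ * _); rewrite m11_tr trmx_mul trmxK.
Qed.

Lemma Cmap_col s u d : Cmap G s (col_mx u d) =
  col_mx (sgnb R s *: adjmx (d^T *m invmx G)) (adjmx u *m G)^T.
Proof. by rewrite /Cmap /mkW /Wpart /Dpart col_mxKu col_mxKd /C0inv /C0. Qed.

Lemma bC s w1 w2 : bW s (Cmap G s w1) w2 = ipW G w1 w2.
Proof.
rewrite -[w1]vsubmxK -[w2]vsubmxK.
move: (usubmx w1) (dsubmx w1) (usubmx w2) (dsubmx w2) => u1 d1 u2 d2.
rewrite Cmap_col /bW /ipW /Wpart /Dpart !col_mxKu !col_mxKd !trmxK.
rewrite /ipV /C0inv adjmxK -!mulmxA (mulmxA (invmx G)) mulVmx // mul1mx.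
by rewrite -scalemxAr scalemxij mulrA sgnb_sq mul1r.
Qed.

Lemma CC s w : Cmap G s (Cmap G s w) = sgnb R s *: w.
Proof.
rewrite -[w]vsubmxK; move: (usubmx w) (dsubmx w) => u d.
rewrite !Cmap_col trmxK scale_col_mx; congr col_mx.
  by rewrite mulmxK // adjmxK.
by rewrite adjmxZ sgnb_conj adjmxK -scalemxAl mulmxKV // linearZ /= trmxK.
Qed.

Lemma Cmap_scale s a w : Cmap G s (a *: w) = a^* *: Cmap G s w.
Proof.
rewrite -[w]vsubmxK; move: (usubmx w) (dsubmx w) => u d.
rewrite scale_col_mx !Cmap_col scale_col_mx; congr col_mx.
  by rewrite linearZ /= -scalemxAl adjmxZ !scalerA mulrC.
by rewrite adjmxZ -scalemxAl linearZ.
Qed.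

End B.

Lemma gram_ip (R : rcfType) n (F : 'cV[R[i]]_(n + n) -> 'cV[R[i]]_(n + n) -> R[i]) M :
  (forall w1 w2, F w1 w2 = (adjmx w1 *m M *m w2) 0 0) -> gramW F = M.
Proof. by move=> FM; apply/matrixP=> i j; rewrite mxE FM adjmx_delta entry_form. Qed.

Lemma gram_b (R : rcfType) n (F : 'cV[R[i]]_(n + n) -> 'cV[R[i]]_(n + n) -> R[i]) M :
  (forall w1 w2, F w1 w2 = (w1^T *m M *m w2) 0 0) -> gramW F = M.
Proof. by move=> FM; apply/matrixP=> i j; rewrite mxE FM trmx_delta entry_form. Qed.


Unset Implicit Arguments. Set Strict Implicit.


Section C.
Variable R : rcfType.
Local Notation K := (R[i]).
Variable n : nat.
Variable G : 'M[K]_n.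
Hypothesis Gu : G \in unitmx.
Variable s : bool.
Variables T Tinv : 'cV[K]_(n + n) -> 'cV[K]_(n + n).
Hypothesis T_antilin : forall (a : K) (w1 w2 : 'cV[K]_(n + n)),
      T (a *: w1 + w2) = a^* *: T w1 + T w2.
Hypothesis T_antiunit : forall w1 w2, ipW G (T w1) (T w2) = (ipW G w1 w2)^*.
Hypothesis TinvK : cancel Tinv T.
Hypothesis TC : forall w, T (Cmap G s w) = Cmap G s (T w).

Lemma TD w1 w2 : T (w1 + w2) = T w1 + T w2.
Proof. by rewrite -[w1]scale1r T_antilin rmorph1 !scale1r. Qed.

Lemma T0 : T 0 = 0.
Proof.
have h := TD 0 0; rewrite addr0 in h.
by apply: (addrI (T 0)); rewrite addr0 -h.
Qed.

Lemma TZ a w : T (a *: w) = a^* *: T w.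
Proof. by rewrite -[a *: w]addr0 T_antilin T0 addr0. Qed.

Lemma conj_delta m p (i : 'I_m) (j : 'I_p) : map_mx Num.conj (delta_mx i j : 'M[K]_(m,p)) = delta_mx i j.
Proof. by apply/matrixP => a b; rewrite !mxE rmorph_nat. Qed.

Definition Tm := fun_mx T.

Lemma Tcol i : Tm *m delta_mx i 0 = T (delta_mx i 0).
Proof. by rewrite -colE; apply/matrixP => a b; rewrite !mxE (ord1 b). Qed.

Lemma T_mx w : T w = Tm *m map_mx Num.conj w.
Proof.
rewrite {1}[w]matrix_sum_delta (big_morph T TD T0).
have -> : map_mx Num.conj w = map_mx Num.conj (\sum_i \sum_j w i j *: delta_mx i j).
  by rewrite -matrix_sum_delta.
rewrite raddf_sum mulmx_sumr.
apply: eq_bigr => i _.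
rewrite (big_morph T TD T0) raddf_sum mulmx_sumr; apply: eq_bigr => j _.
rewrite TZ /= map_mxZ -scalemxAr conj_delta (ord1 j); congr (_ *: _); symmetry; exact: Tcol.


Qed.


Lemma HW_unit : HW G \in unitmx.
Proof.
have h : HW G *m block_mx (invmx G) 0 0 (map_mx Num.conj G) = 1%:M.
  rewrite /HW mulmx_block !mulmx0 ?mul0mx addr0 add0r -map_mxM mulVmx // mulmxV //.
  by rewrite map_mx1 add0r -scalar_mx_block.
by case: (mulmx1_unit h).
Qed.

Definition BWinv : 'M[K]_(n + n) := block_mx 0 1%:M (sgnb R s)%:M 0.

Lemma BW_inv : BW R n s *m BWinv = 1%:M.
Proof.
rewrite /BW /BWinv mulmx_block !mulmx0 ?mul0mx !addr0 ?add0r mul1mx.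
by rewrite -scalar_mxM sgnb_sq -scalar_mx_block.
Qed.

Lemma BW_unit : BW R n s \in unitmx.
Proof. by case: (mulmx1_unit BW_inv). Qed.

Lemma BW_invE : invmx (BW R n s) = BWinv.
Proof. exact: invmx_eq BW_inv. Qed.

Lemma Tform : adjmx Tm *m HW G *m Tm = map_mx Num.conj (HW G).
Proof.
apply/matrixP => i j; rewrite -[LHS]entry_form !mulmxA -(@adjmx_delta R _ _ i (0:'I_1)) -adjmxM.
rewrite -mulmxA !Tcol -(ipW_form Gu) T_antiunit (ipW_form Gu).
by rewrite adjmx_delta -rowE -colE !mxE.
Qed.

Lemma bT w1 w2 : bW s (T w1) (T w2) = (bW s w1 w2)^*.
Proof.
set u := sgnb R s *: Cmap G s w1.
have Cu : Cmap G s u = w1.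
  by rewrite /u Cmap_scale sgnb_conj (CC Gu) scalerA sgnb_sq scale1r.
by rewrite -Cu TC !(bC Gu) T_antiunit.
Qed.

Lemma Tbform : Tm^T *m BW R n s *m Tm = map_mx Num.conj (BW R n s).
Proof.
apply/matrixP => i j; rewrite -[LHS]entry_form !mulmxA -(trmx_delta _ i (0:'I_1)) -trmx_mul.
rewrite -mulmxA !Tcol -bW_form bT bW_form.
by rewrite trmx_delta -rowE -colE !mxE.
Qed.

Lemma adjmx_unit k (M : 'M[K]_k) : (adjmx M \in unitmx) = (M \in unitmx).
Proof. by rewrite /adjmx unitmx_tr map_unitmx. Qed.

Lemma Tm_unit : Tm \in unitmx.
Proof.
have : map_mx Num.conj (HW G) \in unitmx by rewrite map_unitmx HW_unit.
by rewrite -Tform unitmx_mul => /andP [].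
Qed.

Lemma theta_mx A : thetaW T Tinv A = Tm *m map_mx Num.conj A *m invmx Tm.
Proof.
apply/matrixP => i j; rewrite mxE T_mx map_mxM.
have h : map_mx Num.conj (Tinv (delta_mx j 0)) = invmx Tm *m delta_mx j 0.
  by rewrite -[X in invmx Tm *m X]TinvK T_mx mulKmx // Tm_unit.
by rewrite h !mulmxA -colE mxE.
Qed.

End C.


Lemma gen_conj (F : comUnitRingType) k (P Y X Q : 'M[F]_k) :
  P \in unitmx -> Y \in unitmx -> Q \in unitmx ->
  invmx Y *m invmx P *m X *m P *m Y =
  Q *m (invmx (P *m Y *m Q) *m X *m (P *m Y *m Q)) *m invmx Q.
Proof.
move=> Pu Yu Qu.
have PYu : P *m Y \in unitmx by rewrite unitmx_mul Pu.
rewrite invmxM' // invmxM' // !mulmxA mulmxV // mul1mx mulmxK //.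
Qed.

Lemma gen_key (F : comUnitRingType) k (H B X : 'M[F]_k) :
  H \in unitmx -> B \in unitmx ->
  invmx H *m (H *m invmx B *m H^T) *m X *m invmx (H *m invmx B *m H^T) *m H =
  invmx B *m H^T *m X *m invmx H^T *m B.
Proof.
move=> Hu Bu.
have iBu : invmx B \in unitmx by rewrite unitmx_inv.
have HTu : H^T \in unitmx by rewrite unitmx_tr.
have HBu : H *m invmx B \in unitmx by rewrite unitmx_mul Hu.
rewrite invmxM' // invmxM' // invmxK !mulmxA mulVmx // mul1mx mulmxKV //.
Qed.

Lemma BW_key (R : rcfType) n (G : 'M[R[i]]_n) s : adjmx G = G -> G \in unitmx ->
  adjmx (BW R n s) = HW G *m invmx (BW R n s) *m (HW G)^T.
Proof.
move=> Gh Gu.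
have hG1 : (map_mx Num.conj (invmx G))^T = invmx G.
  by change (adjmx (invmx G) = invmx G); rewrite adjmx_inv Gh.
rewrite BW_invE /HW /BWinv /BW /adjmx map_block_mx tr_block_mx.
rewrite !map_mx0 !trmx0 !map_scalar_mx !tr_scalar_mx.
rewrite mulmx_block !mulmx0 ?mul0mx !addr0 ?add0r !mulmx1 tr_block_mx !trmx0.
rewrite mulmx_block !mulmx0 ?mul0mx !addr0 ?add0r.
congr block_mx.
- by rewrite hG1 mulmxV // rmorph1.
- rewrite mul_mx_scalar -scalemxAl -[map_mx Num.conj (invmx G)]trmxK hG1.
  rewrite -trmx_mul mulmxV // trmx1 scalemx1.
  by congr (_%:M); exact: sgnb_conj.
Qed.

Lemma adjmx_trT (R : rcfType) m p (A : 'M[R[i]]_(m,p)) : (adjmx A)^T = map_mx Num.conj A.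
Proof. by rewrite /adjmx trmxK. Qed.
Lemma conj_adj (R : rcfType) m p (A : 'M[R[i]]_(m,p)) : map_mx Num.conj (adjmx A) = A^T.
Proof. by apply/matrixP => i j; rewrite !mxE conjCK. Qed.
Lemma conj_tr (R : rcfType) m p (A : 'M[R[i]]_(m,p)) : map_mx Num.conj (A^T) = adjmx A.
Proof. by rewrite /adjmx map_trmx. Qed.

Lemma trN (F : zmodType) m p (M : 'M[F]_(m,p)) : (- M)^T = - M^T.
Proof. by apply/matrixP => i j; rewrite !mxE. Qed.

Theorem proposition4p3 (R : rcfType) (n : nat) (G : 'M[R[i]]_n)
  (G_herm : adjmx G = G)
  (G_pos : forall v : 'cV[R[i]]_n, v != 0 -> 0 < ipV G v v)
  (sym Eall : bool)
  (T Tinv : 'cV[R[i]]_(n + n) -> 'cV[R[i]]_(n + n))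
  (T_antilin : forall (a : R[i]) (w1 w2 : 'cV[R[i]]_(n + n)),
      T (a *: w1 + w2) = a^* *: T w1 + T w2)
  (T_antiunit : forall w1 w2, ipW G (T w1) (T w2) = (ipW G w1 w2)^*)
  (TK : cancel T Tinv) (TinvK : cancel Tinv T)
  (TC : forall w, T (Cmap G sym w) = Cmap G sym (T w))
  (T2 : (forall w, T (T w) = w) \/ (forall w, T (T w) = - w))
  (Tmix : (maps_onto T (@inV R n) (@inV R n) /\ maps_onto T (@inVd R n) (@inVd R n))
       \/ (maps_onto T (@inV R n) (@inVd R n) /\ maps_onto T (@inVd R n) (@inV R n)))
  (A : 'M[R[i]]_(n + n)) (HA : inEsp Eall A) :
  sigmaW G (tauW sym A) = tauW sym (sigmaW G A) /\
  sigmaW G (thetaW T Tinv A) = thetaW T Tinv (sigmaW G A) /\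
  tauW sym (thetaW T Tinv A) = thetaW T Tinv (tauW sym A).
Proof.
have Gu := G_unit G_pos.
have eH : gramW (ipW G) = HW G by apply: gram_ip; exact: ipW_form.
have eB : gramW (bW sym) = BW R n sym by apply: gram_b; exact: bW_form.
have Hu := HW_unit _ _ _ Gu. have Bu := BW_unit R n sym.
have Tmu := Tm_unit _ _ _ Gu _ T_antiunit.
have thE := theta_mx _ _ _ Gu _ _ T_antilin T_antiunit TinvK.
rewrite /sigmaW /tauW /adjW /transW eH eB !thE.
split; [|split].
- rewrite adjmxN trN !(mulmxN, mulNmx, opprK).
  rewrite !adjmxM adjmx_tr adjmx_inv !trmx_mul trmx_inv adjmx_trT (BW_key _ _ _ sym G_herm Gu).
  have h := @gen_key _ _ _ _ (map_mx Num.conj A) Hu Bu.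
  by rewrite !mulmxA in h *; exact: h.
- rewrite !adjmxM adjmx_inv adjmx_conj map_mxN !map_mxM map_invmx conj_adj.
  rewrite -(Tform _ _ _ Gu _ T_antiunit) !(mulmxN, mulNmx); congr (- _).
  have aTu : adjmx (Tm R n T) \in unitmx by rewrite adjmx_unit.
  have h := @gen_conj _ _ _ _ (A^T) _ aTu Hu Tmu.
  by rewrite !mulmxA in h *; exact: h.
- rewrite !trmx_mul trmx_inv map_mxN !map_mxM map_invmx conj_tr -/(adjmx A).
  rewrite -(Tbform _ _ _ Gu _ _ T_antiunit TC) !(mulmxN, mulNmx); congr (- _).
  have tTu : (Tm R n T)^T \in unitmx by rewrite unitmx_tr.
  have h := @gen_conj _ _ _ _ (adjmx A) _ tTu Bu Tmu.
  by rewrite !mulmxA in h *; exact: h.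
Qed.
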